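(* Let $\{(\Gamma_t,\theta_t)\}_{t\in[0,\underline t)}$ solve the framed curvature flow with $\theta$-velocity $$\upsilon_\theta=-(\kappa\,\partial_s\psi_3+2\,\partial_s\kappa\,\psi_3)\kappa^{-2}\psi_1-\kappa\psi_2^{-1}\psi_3^2-(\partial_s^2\kappa-\kappa\psi_3^2)\kappa^{-2}\psi_2$$ (the flow generating a trajectory surface of constant Gaussian curvature $K=0$). Then $\int_{\Gamma_t}\psi_1\,ds$ is independent of $t\in[0,\underline t)$.
   Context: $S^1=\mathbb{R}/2\pi\mathbb{Z}$; closed curves $\Gamma_t$ parametrized by $\gamma(t,\cdot):S^1\to\mathbb{R}^3$, $g=\|\partial_u\gamma\|$, $ds=g\,du$, $\partial_s=g^{-1}\partial_u$; Frenet frame $T,N,B$, curvature $\kappa$, torsion $\tau$. For an angle function $\theta$: $\nu_\theta=\cos\theta N+\sin\theta B$, $\psi_1=\kappa\cos\theta$, $\psi_2=\kappa\sin\theta$, $\psi_3=\tau+\partial_s\theta$; the formula for $\upsilon_\theta$ presupposes $\kappa>0$ and $\psi_2\neq0$. Framed curvature flow: $\partial_t\gamma=\kappa\nu_\theta$, $\partial_t\theta=\upsilon_\theta$. *)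

(* Defs.v *)
From Stdlib Require Import Reals List.
From Coquelicot Require Import Coquelicot.
Open Scope R_scope.

Definition vec := (R * R * R)%type.
Definition mkv (x y z : R) : vec := (x, y, z).
Definition vx (v : vec) : R := fst (fst v).
Definition vy (v : vec) : R := snd (fst v).
Definition vz (v : vec) : R := snd v.
Definition vadd (a b : vec) : vec := mkv (vx a + vx b) (vy a + vy b) (vz a + vz b).
Definition vscal (c : R) (a : vec) : vec := mkv (c * vx a) (c * vy a) (c * vz a).
Definition vdot (a b : vec) : R := vx a * vx b + vy a * vy b + vz a * vz b.
Definition vcross (a b : vec) : vec :=
  mkv (vy a * vz b - vz a * vy b) (vz a * vx b - vx a * vz b) (vx a * vy b - vy a * vx b).
Definition vnorm (a : vec) : R := sqrt (vdot a a).

(** * Fields on (t,u)-space; u is the 2pi-periodic curve parameter *)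
Definition field := R -> R -> R.
Definition vfield := R -> R -> vec.

Definition d_u (f : field) : field := fun t u => Derive (fun v => f t v) u.
Definition d_t (f : field) : field := fun t u => Derive (fun s => f s u) t.
Definition vd_u (F : vfield) : vfield := fun t u =>
  mkv (d_u (fun t u => vx (F t u)) t u) (d_u (fun t u => vy (F t u)) t u)
      (d_u (fun t u => vz (F t u)) t u).
Definition vd_t (F : vfield) : vfield := fun t u =>
  mkv (d_t (fun t u => vx (F t u)) t u) (d_t (fun t u => vy (F t u)) t u)
      (d_t (fun t u => vz (F t u)) t u).

Inductive pdir := Pt | Pu.
Definition pd (d : pdir) (f : field) : field :=
  match d with Pt => d_t f | Pu => d_u f end.
Definition iter_pd (ds : list pdir) (f : field) : field := fold_right pd f ds.

Definition open2 (U : R -> R -> Prop) : Prop :=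
  forall t u, U t u -> exists eps : R, 0 < eps /\
    forall t' u', Rabs (t' - t) < eps -> Rabs (u' - u) < eps -> U t' u'.

Definition smooth_on (U : R -> R -> Prop) (f : field) : Prop :=
  forall (ds : list pdir) (t u : R), U t u ->
    ex_derive (fun s => iter_pd ds f s u) t /\
    ex_derive (fun v => iter_pd ds f t v) u /\
    continuous (fun p : R * R => iter_pd ds f (fst p) (snd p)) (t, u).

Definition vsmooth_on (U : R -> R -> Prop) (F : vfield) : Prop :=
  smooth_on U (fun t u => vx (F t u)) /\ smooth_on U (fun t u => vy (F t u)) /\
  smooth_on U (fun t u => vz (F t u)).

Section Geometry.
Variables (gam : vfield) (th : field).

Definition speed : field := fun t u => vnorm (vd_u gam t u).
Definition s_der (f : field) : field := fun t u => d_u f t u / speed t u.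
Definition vs_der (F : vfield) : vfield := fun t u => vscal (/ speed t u) (vd_u F t u).

Definition tangent : vfield := fun t u => vscal (/ speed t u) (vd_u gam t u).
Definition curvature : field := fun t u => vnorm (vs_der tangent t u).
Definition normal : vfield := fun t u => vscal (/ curvature t u) (vs_der tangent t u).
Definition binormal : vfield := fun t u => vcross (tangent t u) (normal t u).
(* N_s = -kappa T + tau B *)
Definition torsion : field := fun t u => vdot (vs_der normal t u) (binormal t u).

Definition nu_theta : vfield := fun t u =>
  vadd (vscal (cos (th t u)) (normal t u)) (vscal (sin (th t u)) (binormal t u)).
Definition psi1 : field := fun t u => curvature t u * cos (th t u).
Definition psi2 : field := fun t u => curvature t u * sin (th t u).
Definition psi3 : field := fun t u => torsion t u + s_der th t u.

Definition upsilon : field := fun t u =>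
  - (curvature t u * s_der psi3 t u + 2 * s_der curvature t u * psi3 t u)
      * / (curvature t u ^ 2) * psi1 t u
  - curvature t u * / psi2 t u * psi3 t u ^ 2
  - (s_der (s_der curvature) t u - curvature t u * psi3 t u ^ 2)
      * / (curvature t u ^ 2) * psi2 t u.

(* int_{Gamma_t} psi1 ds = int_0^{2pi} psi1 g du *)
Definition total_psi1 (t : R) : R := RInt (fun u => psi1 t u * speed t u) 0 (2 * PI).
End Geometry.

(* Main.v *)
Require Import Defs.
From Stdlib Require Import Reals Lra List ClassicalEpsilon Classical.
From Coquelicot Require Import Coquelicot.
Open Scope R_scope.
Ltac eta_fix := repeat match goal with |- context [Derive (fun y => ?f y) ?x] => change (Derive (fun y => f y) x) with (Derive f x) end;
  repeat match goal with |- context [fun y : R => ?f y] => change (fun y : R => f y) with f end.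

Fixpoint Cn (n : nat) (f : R -> R) : Prop :=
  match n with O => True | S m => (forall x, ex_derive f x) /\ Cn m (Derive f) end.
Definition sm (f : R -> R) := forall n, Cn n f.

Lemma Cn_ext n : forall f g, (forall x, f x = g x) -> Cn n f -> Cn n g.
Proof.
  induction n as [|n IH]; simpl; auto.
  intros f g H [H1 H2]; split.
  - intro x; apply ex_derive_ext with f; auto.
  - apply IH with (Derive f); auto. intro x; apply Derive_ext; auto.
Qed.

Lemma Cn_S n : forall f, Cn (S n) f -> Cn n f.
Proof.
  induction n as [|n IH]; simpl; auto.
  intros f [H1 [H2 H3]]; split; auto. apply IH. simpl; auto.
Qed.

Lemma Cn_const n : forall c, Cn n (fun _ => c).
Proof.
  induction n as [|n IH]; simpl; auto. intros c; split.
  - intros; apply ex_derive_const.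
  - apply Cn_ext with (fun _ => 0). intros; rewrite Derive_const; auto. apply IH.
Qed.

Lemma Cn_id n : Cn n (fun x => x).
Proof.
  destruct n; simpl; auto. split. intros; apply ex_derive_id.
  apply Cn_ext with (fun _ => 1). intros; rewrite Derive_id; auto. apply Cn_const.
Qed.

Lemma Cn_plus n : forall f g, Cn n f -> Cn n g -> Cn n (fun x => f x + g x).
Proof.
  induction n as [|n IH]; simpl; auto.
  intros f g [F1 F2] [G1 G2]; split.
  - intros x; apply (ex_derive_plus f g x); auto.
  - apply Cn_ext with (fun x => Derive f x + Derive g x).
    intros; rewrite Derive_plus; auto. apply IH; auto.
Qed.

Lemma Cn_opp n : forall f, Cn n f -> Cn n (fun x => - f x).
Proof.
  induction n as [|n IH]; simpl; auto.
  intros f [F1 F2]; split.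
  - intros x; apply (ex_derive_opp f x); auto.
  - apply Cn_ext with (fun x => - Derive f x).
    intros; rewrite Derive_opp; auto. apply IH; auto.
Qed.

Lemma Cn_mult n : forall f g, Cn n f -> Cn n g -> Cn n (fun x => f x * g x).
Proof.
  induction n as [|n IH]; simpl; auto.
  intros f g [F1 F2] [G1 G2]; split.
  - intros x; apply (ex_derive_mult f g x); auto.
  - apply Cn_ext with (fun x => Derive f x * g x + f x * Derive g x).
    intros; rewrite Derive_mult; auto. apply Cn_plus; apply IH; auto.
    + apply Cn_S; simpl; auto.
    + apply Cn_S; simpl; auto.
Qed.

Lemma Cn_inv n : forall f, (forall x, f x <> 0) -> Cn n f -> Cn n (fun x => / f x).
Proof.
  induction n as [|n IH]; simpl; auto.
  intros f Hf [F1 F2]; split.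
  - intros x; apply (ex_derive_inv f x); auto.
  - apply Cn_ext with (fun x => - (Derive f x * (/ f x * / f x))).
    intros; rewrite Derive_inv; auto. field; auto.
    apply Cn_opp. apply Cn_mult; auto. apply Cn_mult; apply IH; auto;
    apply Cn_S; simpl; auto.
Qed.

Lemma Cn_sqrt n : forall f, (forall x, 0 < f x) -> Cn n f -> Cn n (fun x => sqrt (f x)).
Proof.
  induction n as [|n IH]; simpl; auto.
  intros f Hf [F1 F2]; split.
  - intros x. apply ex_derive_comp. exists (/ (2 * sqrt (f x))); apply is_derive_Reals; apply derivable_pt_lim_sqrt; auto.
    auto.
  - apply Cn_ext with (fun x => Derive f x * / (2 * sqrt (f x))).
    intros x. assert (E: ex_derive (fun x => sqrt x) (f x)) by
      (exists (/ (2 * sqrt (f x))); apply is_derive_Reals; apply derivable_pt_lim_sqrt; auto).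
    rewrite (Derive_comp sqrt f x); auto.
    rewrite (is_derive_unique sqrt (f x) (/ (2 * sqrt (f x)))). ring.
    apply is_derive_Reals. apply derivable_pt_lim_sqrt; auto.
    apply Cn_mult; auto. apply Cn_inv.
    intros x; specialize (sqrt_lt_R0 _ (Hf x)); lra.
    apply Cn_mult. apply Cn_const. apply IH; auto. apply Cn_S; simpl; auto.
Qed.

Lemma Cn_cos_sin n : forall f, Cn n f -> Cn n (fun x => cos (f x)) /\ Cn n (fun x => sin (f x)).
Proof.
  induction n as [|n IH]; simpl; auto.
  intros f [F1 F2]. destruct (IH f) as [IC IS]. apply Cn_S; simpl; auto.
  split; split.
  - intros; apply ex_derive_comp; auto. exists (- sin (f x)); apply is_derive_Reals; apply derivable_pt_lim_cos.
  - apply Cn_ext with (fun x => Derive f x * - sin (f x)).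
    intros x. rewrite (Derive_comp cos f x); auto.
    rewrite (is_derive_unique cos (f x) (- sin (f x))). ring.
    apply is_derive_Reals. apply derivable_pt_lim_cos.
    exists (- sin (f x)); apply is_derive_Reals; apply derivable_pt_lim_cos.
    apply Cn_mult; auto. apply Cn_opp; auto.
  - intros; apply ex_derive_comp; auto. exists (cos (f x)); apply is_derive_Reals; apply derivable_pt_lim_sin.
  - apply Cn_ext with (fun x => Derive f x * cos (f x)).
    intros x. rewrite (Derive_comp sin f x); auto.
    rewrite (is_derive_unique sin (f x) (cos (f x))). ring.
    apply is_derive_Reals. apply derivable_pt_lim_sin.
    exists (cos (f x)); apply is_derive_Reals; apply derivable_pt_lim_sin.
    apply Cn_mult; auto.
Qed.

Lemma sm_ext f g : (forall x, f x = g x) -> sm f -> sm g.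
Proof. intros H S n; apply Cn_ext with f; auto. Qed.
Lemma sm_const c : sm (fun _ => c). Proof. intro n; apply Cn_const. Qed.
Lemma sm_plus f g : sm f -> sm g -> sm (fun x => f x + g x).
Proof. intros A B n; apply Cn_plus; auto. Qed.
Lemma sm_opp f : sm f -> sm (fun x => - f x).
Proof. intros A n; apply Cn_opp; auto. Qed.
Lemma sm_minus f g : sm f -> sm g -> sm (fun x => f x - g x).
Proof. intros A B; apply sm_plus; auto; apply sm_opp; auto. Qed.
Lemma sm_mult f g : sm f -> sm g -> sm (fun x => f x * g x).
Proof. intros A B n; apply Cn_mult; auto. Qed.
Lemma sm_inv f : (forall x, f x <> 0) -> sm f -> sm (fun x => / f x).
Proof. intros H A n; apply Cn_inv; auto. Qed.
Lemma sm_sqrt f : (forall x, 0 < f x) -> sm f -> sm (fun x => sqrt (f x)).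
Proof. intros H A n; apply Cn_sqrt; auto. Qed.
Lemma sm_cos f : sm f -> sm (fun x => cos (f x)).
Proof. intros A n; apply Cn_cos_sin; auto. Qed.
Lemma sm_sin f : sm f -> sm (fun x => sin (f x)).
Proof. intros A n; apply Cn_cos_sin; auto. Qed.
Lemma sm_Derive f : sm f -> sm (Derive f).
Proof. intros A n; apply (A (S n)). Qed.
Lemma sm_ex f x : sm f -> ex_derive f x.
Proof. intros A; apply (A 1%nat). Qed.

Lemma vec_eq (a b : vec) : vx a = vx b -> vy a = vy b -> vz a = vz b -> a = b.
Proof. destruct a as [[a1 a2] a3], b as [[b1 b2] b3]; unfold vx, vy, vz; simpl; intros; subst; auto. Qed.

Definition vD (F : R -> vec) (x : R) : vec :=
  mkv (Derive (fun v => vx (F v)) x) (Derive (fun v => vy (F v)) x) (Derive (fun v => vz (F v)) x).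
Definition vsm (F : R -> vec) := sm (fun v => vx (F v)) /\ sm (fun v => vy (F v)) /\ sm (fun v => vz (F v)).

Lemma vx_mkv a b c : vx (mkv a b c) = a. Proof. reflexivity. Qed.
Lemma vy_mkv a b c : vy (mkv a b c) = b. Proof. reflexivity. Qed.
Lemma vz_mkv a b c : vz (mkv a b c) = c. Proof. reflexivity. Qed.

Lemma vsm_ext F G : (forall x, F x = G x) -> vsm F -> vsm G.
Proof.
  intros H [A [B C]]; repeat split.
  - apply sm_ext with (fun v => vx (F v)); auto; intros; rewrite H; auto.
  - apply sm_ext with (fun v => vy (F v)); auto; intros; rewrite H; auto.
  - apply sm_ext with (fun v => vz (F v)); auto; intros; rewrite H; auto.
Qed.

Lemma vsm_mkv f g h : sm f -> sm g -> sm h -> vsm (fun v => mkv (f v) (g v) (h v)).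
Proof. intros; repeat split; auto. Qed.

Lemma vsm_scal a F : sm a -> vsm F -> vsm (fun v => vscal (a v) (F v)).
Proof. intros Ha [A [B C]]; repeat split; simpl; apply sm_mult; auto. Qed.

Lemma vsm_add F G : vsm F -> vsm G -> vsm (fun v => vadd (F v) (G v)).
Proof. intros [A [B C]] [A' [B' C']]; repeat split; simpl; apply sm_plus; auto. Qed.

Lemma vsm_cross F G : vsm F -> vsm G -> vsm (fun v => vcross (F v) (G v)).
Proof. intros [A [B C]] [A' [B' C']]; repeat split; simpl; apply sm_minus; apply sm_mult; auto. Qed.

Lemma sm_dot F G : vsm F -> vsm G -> sm (fun v => vdot (F v) (G v)).
Proof. intros [A [B C]] [A' [B' C']]; unfold vdot; repeat apply sm_plus; apply sm_mult; auto. Qed.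

Lemma vsm_vD F : vsm F -> vsm (vD F).
Proof. intros [A [B C]]; repeat split; simpl; apply sm_Derive; auto. Qed.

Lemma Derive_dot3 (f1 f2 f3 g1 g2 g3 : R -> R) (x : R) :
  ex_derive f1 x -> ex_derive f2 x -> ex_derive f3 x ->
  ex_derive g1 x -> ex_derive g2 x -> ex_derive g3 x ->
  Derive (fun v => f1 v * g1 v + f2 v * g2 v + f3 v * g3 v) x =
  (Derive f1 x * g1 x + Derive f2 x * g2 x + Derive f3 x * g3 x) +
  (f1 x * Derive g1 x + f2 x * Derive g2 x + f3 x * Derive g3 x).
Proof.
  intros. apply is_derive_unique. auto_derive. repeat split; auto. eta_fix. ring.
Qed.

Lemma Derive_dot F G x : vsm F -> vsm G ->
  Derive (fun v => vdot (F v) (G v)) x = vdot (vD F x) (G x) + vdot (F x) (vD G x).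
Proof.
  intros [A [B C]] [A' [B' C']]. unfold vdot, vD; simpl.
  apply Derive_dot3; apply sm_ex; auto.
Qed.

Lemma sm_iter U f t0 : smooth_on U f -> (forall v, U t0 v) ->
  forall ds, sm (fun v => iter_pd ds f t0 v).
Proof.
  intros Hs HU ds n. revert ds. induction n as [|n IH]; simpl; auto.
  intros ds; split.
  - intro x. apply (proj1 (proj2 (Hs ds t0 x (HU x)))).
  - apply Cn_ext with (fun v => iter_pd (Pu :: ds) f t0 v). intros; reflexivity. apply IH.
Qed.

Lemma sqrt_pos_inv x : 0 < sqrt x -> 0 < x.
Proof. intros H. destruct (Rle_lt_dec x 0) as [h|h]; auto. rewrite sqrt_neg_0 in H; lra. Qed.

Definition Hyp (gam : vfield) (th : field) (t0 : R) :=
  vsm (gam t0) /\ sm (th t0) /\ vsm (fun v => vd_t gam t0 v) /\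
  (forall v, 0 < speed gam t0 v) /\ (forall v, 0 < curvature gam t0 v).


Lemma vd_u_vD F t0 v : vd_u F t0 v = vD (F t0) v.
Proof. reflexivity. Qed.

Lemma L_P gam th t0 : Hyp gam th t0 -> vsm (vd_u gam t0).
Proof. intros [H _]. apply vsm_ext with (vD (gam t0)). intros; reflexivity. apply vsm_vD; auto. Qed.

Lemma L_pp_pos gam t0 v : 0 < speed gam t0 v -> 0 < vdot (vd_u gam t0 v) (vd_u gam t0 v).
Proof. intros H. apply sqrt_pos_inv. exact H. Qed.

Lemma L_g gam th t0 : Hyp gam th t0 -> sm (speed gam t0).
Proof.
  intros H. pose proof (L_P _ _ _ H) as HP. destruct H as [_ [_ [_ [Hg _]]]].
  apply sm_ext with (fun v => sqrt (vdot (vd_u gam t0 v) (vd_u gam t0 v))). intros; reflexivity.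
  apply sm_sqrt. intros; apply L_pp_pos; auto. apply sm_dot; auto.
Qed.

Lemma L_T gam th t0 : Hyp gam th t0 -> vsm (tangent gam t0).
Proof.
  intros H. pose proof (L_P _ _ _ H) as HP. pose proof (L_g _ _ _ H) as Hg.
  destruct H as [_ [_ [_ [Hg' _]]]].
  apply vsm_ext with (fun v => vscal (/ speed gam t0 v) (vd_u gam t0 v)). intros; reflexivity.
  apply vsm_scal; auto. apply sm_inv; auto. intros x; specialize (Hg' x); lra.
Qed.

Lemma L_W gam th t0 : Hyp gam th t0 -> vsm (vs_der gam (tangent gam) t0).
Proof.
  intros H. pose proof (L_T _ _ _ H) as HT. pose proof (L_g _ _ _ H) as Hg.
  destruct H as [_ [_ [_ [Hg' _]]]].
  apply vsm_ext with (fun v => vscal (/ speed gam t0 v) (vD (tangent gam t0) v)). intros; reflexivity.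
  apply vsm_scal; auto. apply sm_inv; auto. intros x; specialize (Hg' x); lra.
  apply vsm_vD; auto.
Qed.

Lemma L_k gam th t0 : Hyp gam th t0 -> sm (curvature gam t0).
Proof.
  intros H. pose proof (L_W _ _ _ H) as HW.
  destruct H as [_ [_ [_ [_ Hk]]]].
  apply sm_ext with (fun v => sqrt (vdot (vs_der gam (tangent gam) t0 v) (vs_der gam (tangent gam) t0 v))). intros; reflexivity.
  apply sm_sqrt. intros; apply sqrt_pos_inv; apply Hk. apply sm_dot; auto.
Qed.

Lemma L_N gam th t0 : Hyp gam th t0 -> vsm (normal gam t0).
Proof.
  intros H. pose proof (L_W _ _ _ H) as HW. pose proof (L_k _ _ _ H) as Hk.
  destruct H as [_ [_ [_ [_ Hk']]]].
  apply vsm_ext with (fun v => vscal (/ curvature gam t0 v) (vs_der gam (tangent gam) t0 v)). intros; reflexivity.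
  apply vsm_scal; auto. apply sm_inv; auto. intros x; specialize (Hk' x); lra.
Qed.

Lemma L_B gam th t0 : Hyp gam th t0 -> vsm (binormal gam t0).
Proof.
  intros H. apply vsm_ext with (fun v => vcross (tangent gam t0 v) (normal gam t0 v)). intros; reflexivity.
  apply vsm_cross. apply (L_T _ _ _ H). apply (L_N _ _ _ H).
Qed.

Lemma L_tau gam th t0 : Hyp gam th t0 -> sm (torsion gam t0).
Proof.
  intros H. pose proof (L_N _ _ _ H) as HN. pose proof (L_B _ _ _ H) as HB. pose proof (L_g _ _ _ H) as Hg.
  destruct H as [_ [_ [_ [Hg' _]]]].
  apply sm_ext with (fun v => vdot (vscal (/ speed gam t0 v) (vD (normal gam t0) v)) (binormal gam t0 v)). intros; reflexivity.
  apply sm_dot; auto. apply vsm_scal. apply sm_inv; auto. intros x; specialize (Hg' x); lra.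
  apply vsm_vD; auto.
Qed.

Lemma L_th gam th t0 : Hyp gam th t0 -> sm (th t0).
Proof. intros [_ [H _]]; auto. Qed.

Lemma L_V gam th t0 : Hyp gam th t0 -> vsm (fun v => vd_t gam t0 v).
Proof. intros [_ [_ [H _]]]; auto. Qed.

Lemma L_psi1 gam th t0 : Hyp gam th t0 -> sm (psi1 gam th t0).
Proof.
  intros H. apply sm_ext with (fun v => curvature gam t0 v * cos (th t0 v)). intros; reflexivity.
  apply sm_mult. apply (L_k _ _ _ H). apply sm_cos. apply (L_th _ _ _ H).
Qed.

Lemma L_psi2 gam th t0 : Hyp gam th t0 -> sm (psi2 gam th t0).
Proof.
  intros H. apply sm_ext with (fun v => curvature gam t0 v * sin (th t0 v)). intros; reflexivity.
  apply sm_mult. apply (L_k _ _ _ H). apply sm_sin. apply (L_th _ _ _ H).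
Qed.

Ltac vdes := repeat match goal with v : vec |- _ => let a := fresh "a" in let b := fresh "b" in let c := fresh "c" in destruct v as [[a b] c] end; unfold vdot, vcross, vscal, vadd, mkv, vx, vy, vz in *; simpl in *.

Lemma decomp_id (T N a w : vec) :
  (vdot T T * vdot N N - vdot T N * vdot T N) * vdot a w =
  vdot w T * vdot a T * vdot N N - vdot w T * vdot a N * vdot T N
  - vdot w N * vdot a T * vdot T N + vdot w N * vdot a N * vdot T T
  + vdot w (vcross T N) * vdot a (vcross T N).
Proof. vdes. ring. Qed.

Lemma decomp (T N : vec) : vdot T T = 1 -> vdot N N = 1 -> vdot T N = 0 ->
  forall a w, vdot a w = vdot w T * vdot a T + vdot w N * vdot a N + vdot w (vcross T N) * vdot a (vcross T N).
Proof.
  intros H1 H2 H3 a w. pose proof (decomp_id T N a w) as E. rewrite H1, H2, H3 in E. lra.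
Qed.

Lemma triple_id (T N X Y : vec) :
  vdot (vcross T X) Y * vdot N N - vdot N T * vdot (vcross X Y) N =
  vdot X N * vdot Y (vcross T N) - vdot X (vcross T N) * vdot Y N.
Proof. vdes. ring. Qed.

Lemma triple (T N X Y : vec) : vdot N N = 1 -> vdot T N = 0 ->
  vdot (vcross T X) Y = vdot X N * vdot Y (vcross T N) - vdot X (vcross T N) * vdot Y N.
Proof.
  intros H1 H2. pose proof (triple_id T N X Y) as E.
  assert (vdot N T = 0) by (rewrite <- H2; vdes; ring).
  rewrite H1, H in E. lra.
Qed.

Lemma dot_sym a b : vdot a b = vdot b a. Proof. vdes; ring. Qed.
Lemma dot_scal_l c a b : vdot (vscal c a) b = c * vdot a b. Proof. vdes; ring. Qed.
Lemma dot_scal_r c a b : vdot a (vscal c b) = c * vdot a b. Proof. vdes; ring. Qed.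
Lemma dot_add_l a b c : vdot (vadd a b) c = vdot a c + vdot b c. Proof. vdes; ring. Qed.
Lemma dot_add_r a b c : vdot c (vadd a b) = vdot c a + vdot c b. Proof. vdes; ring. Qed.
Lemma cross_self_dot c a b : vdot (vcross (vscal c a) a) b = 0. Proof. vdes; ring. Qed.
Lemma cross_dot_l a b : vdot (vcross a b) a = 0. Proof. vdes; ring. Qed.
Lemma cross_dot_r a b : vdot (vcross a b) b = 0. Proof. vdes; ring. Qed.
Lemma cross_norm a b : vdot (vcross a b) (vcross a b) = vdot a a * vdot b b - vdot a b * vdot a b.
Proof. vdes; ring. Qed.
Lemma vD_ext F G x : (forall v, F v = G v) -> vD F x = vD G x.
Proof.
  intros H. unfold vD. apply vec_eq; simpl; apply Derive_ext; intros; rewrite H; auto.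
Qed.

Lemma vD_scal (a : R -> R) F x : sm a -> vsm F ->
  vD (fun v => vscal (a v) (F v)) x = vadd (vscal (Derive a x) (F x)) (vscal (a x) (vD F x)).
Proof.
  intros Ha [A [B C]].
  apply vec_eq; cbn [vD vscal vadd vx vy vz mkv fst snd]; rewrite Derive_mult; auto; apply sm_ex; auto.
Qed.

Lemma vD_add F G x : vsm F -> vsm G ->
  vD (fun v => vadd (F v) (G v)) x = vadd (vD F x) (vD G x).
Proof.
  intros [A [B C]] [A' [B' C']].
  apply vec_eq; cbn [vD vscal vadd vx vy vz mkv fst snd]; rewrite Derive_plus; auto; apply sm_ex; auto.
Qed.

Lemma Derive_cr (f1 g1 f2 g2 : R -> R) x : ex_derive f1 x -> ex_derive g1 x -> ex_derive f2 x -> ex_derive g2 x ->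
  Derive (fun v => f1 v * g1 v - f2 v * g2 v) x =
  (Derive f1 x * g1 x - Derive f2 x * g2 x) + (f1 x * Derive g1 x - f2 x * Derive g2 x).
Proof. intros. apply is_derive_unique. auto_derive. repeat split; auto. eta_fix. ring. Qed.

Lemma vD_cross F G x : vsm F -> vsm G ->
  vD (fun v => vcross (F v) (G v)) x = vadd (vcross (vD F x) (G x)) (vcross (F x) (vD G x)).
Proof.
  intros [A [B C]] [A' [B' C']].
  apply vec_eq; cbn [vD vcross vscal vadd vx vy vz mkv fst snd]; apply Derive_cr; apply sm_ex; auto.
Qed.

Lemma sqrt_sq_id p : 0 < sqrt p -> sqrt p * sqrt p = p.
Proof. intros H. apply sqrt_sqrt. left; apply sqrt_pos_inv; auto. Qed.

Lemma F_P gam th t0 v : Hyp gam th t0 ->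
  vd_u gam t0 v = vscal (speed gam t0 v) (tangent gam t0 v).
Proof.
  intros [_ [_ [_ [Hg _]]]]. specialize (Hg v).
  unfold tangent. apply vec_eq; cbn [vscal vx vy vz mkv fst snd]; field; lra.
Qed.

Lemma F_TT gam th t0 v : Hyp gam th t0 -> vdot (tangent gam t0 v) (tangent gam t0 v) = 1.
Proof.
  intros [_ [_ [_ [Hg _]]]]. specialize (Hg v).
  unfold tangent. rewrite dot_scal_l, dot_scal_r.
  unfold speed, vnorm in *. rewrite <- (sqrt_sq_id _ Hg) at 3. field. lra.
Qed.

Lemma F_T' gam th t0 v : Hyp gam th t0 ->
  vD (tangent gam t0) v = vscal (speed gam t0 v * curvature gam t0 v) (normal gam t0 v).
Proof.
  intros [_ [_ [_ [Hg Hk]]]]. specialize (Hg v). specialize (Hk v).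
  unfold normal at 1. unfold vs_der. rewrite vd_u_vD.
  apply vec_eq; cbn [vscal vx vy vz mkv fst snd]; field; lra.
Qed.

Lemma F_NN gam th t0 v : Hyp gam th t0 -> vdot (normal gam t0 v) (normal gam t0 v) = 1.
Proof.
  intros [_ [_ [_ [_ Hk]]]]. specialize (Hk v).
  unfold normal. rewrite dot_scal_l, dot_scal_r.
  unfold curvature, vnorm in *. rewrite <- (sqrt_sq_id _ Hk) at 3. field. lra.
Qed.

Lemma Derive_const_fun (f : R -> R) c x : (forall v, f v = c) -> Derive f x = 0.
Proof. intros H. rewrite (Derive_ext f (fun _ => c)); auto. apply Derive_const. Qed.

Lemma F_TN gam th t0 v : Hyp gam th t0 -> vdot (tangent gam t0 v) (normal gam t0 v) = 0.
Proof.
  intros H. pose proof (Derive_const_fun (fun v => vdot (tangent gam t0 v) (tangent gam t0 v)) 1 v (fun w => F_TT _ _ _ w H)) as E.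
  rewrite Derive_dot in E by apply (L_T _ _ _ H).
  rewrite (F_T' _ _ _ _ H), dot_scal_l, dot_scal_r, (dot_sym (normal _ _ _)) in E.
  destruct H as [_ [_ [_ [Hg Hk]]]]. specialize (Hg v). specialize (Hk v).
  assert (0 < speed gam t0 v * curvature gam t0 v) by (apply Rmult_lt_0_compat; auto).
  nra.
Qed.

Lemma F_TB gam t0 v : vdot (tangent gam t0 v) (binormal gam t0 v) = 0.
Proof. unfold binormal. rewrite dot_sym. apply cross_dot_l. Qed.
Lemma F_NB gam t0 v : vdot (normal gam t0 v) (binormal gam t0 v) = 0.
Proof. unfold binormal. rewrite dot_sym. apply cross_dot_r. Qed.
Lemma F_BB gam th t0 v : Hyp gam th t0 -> vdot (binormal gam t0 v) (binormal gam t0 v) = 1.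
Proof.
  intros H. unfold binormal. rewrite cross_norm, (F_TT _ _ _ _ H), (F_NN _ _ _ _ H), (F_TN _ _ _ _ H). ring.
Qed.

Lemma F_dec gam th t0 v : Hyp gam th t0 -> forall a w,
  vdot a w = vdot w (tangent gam t0 v) * vdot a (tangent gam t0 v) + vdot w (normal gam t0 v) * vdot a (normal gam t0 v)
    + vdot w (binormal gam t0 v) * vdot a (binormal gam t0 v).
Proof.
  intros H. apply decomp. apply (F_TT _ _ _ _ H). apply (F_NN _ _ _ _ H). apply (F_TN _ _ _ _ H).
Qed.

Lemma F_N'N gam th t0 v : Hyp gam th t0 -> vdot (vD (normal gam t0) v) (normal gam t0 v) = 0.
Proof.
  intros H. pose proof (Derive_const_fun (fun v => vdot (normal gam t0 v) (normal gam t0 v)) 1 v (fun w => F_NN _ _ _ w H)) as E.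
  rewrite Derive_dot in E by apply (L_N _ _ _ H).
  rewrite (dot_sym (normal _ _ _)) in E. lra.
Qed.

Lemma F_N'T gam th t0 v : Hyp gam th t0 ->
  vdot (vD (normal gam t0) v) (tangent gam t0 v) = - (speed gam t0 v * curvature gam t0 v).
Proof.
  intros H. pose proof (Derive_const_fun (fun v => vdot (tangent gam t0 v) (normal gam t0 v)) 0 v (fun w => F_TN _ _ _ w H)) as E.
  rewrite Derive_dot in E by (apply (L_T _ _ _ H) || apply (L_N _ _ _ H)).
  rewrite (F_T' _ _ _ _ H), dot_scal_l, (F_NN _ _ _ _ H), (dot_sym (tangent _ _ _)) in E. lra.
Qed.

Lemma F_N'B gam th t0 v : Hyp gam th t0 ->
  vdot (vD (normal gam t0) v) (binormal gam t0 v) = speed gam t0 v * torsion gam t0 v.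
Proof.
  intros [_ [_ [_ [Hg _]]]]. specialize (Hg v).
  unfold torsion at 1, vs_der. rewrite vd_u_vD, dot_scal_l. field. lra.
Qed.

Definition HypV gam th t0 := forall v,
  vd_t gam t0 v = vscal (curvature gam t0 v) (nu_theta gam th t0 v).

Lemma V_T gam th t0 v : Hyp gam th t0 -> HypV gam th t0 ->
  vdot (vd_t gam t0 v) (tangent gam t0 v) = 0.
Proof.
  intros H HV. rewrite HV. unfold nu_theta.
  rewrite dot_scal_l, dot_add_l, !dot_scal_l, (dot_sym (normal _ _ _)), (dot_sym (binormal _ _ _)),
    (F_TN _ _ _ _ H), F_TB. ring.
Qed.

Lemma V_N gam th t0 v : Hyp gam th t0 -> HypV gam th t0 ->
  vdot (vd_t gam t0 v) (normal gam t0 v) = psi1 gam th t0 v.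
Proof.
  intros H HV. rewrite HV. unfold nu_theta, psi1.
  rewrite dot_scal_l, dot_add_l, !dot_scal_l, (dot_sym (binormal _ _ _)),
    (F_NN _ _ _ _ H), F_NB. ring.
Qed.

Lemma V_B gam th t0 v : Hyp gam th t0 -> HypV gam th t0 ->
  vdot (vd_t gam t0 v) (binormal gam t0 v) = psi2 gam th t0 v.
Proof.
  intros H HV. rewrite HV. unfold nu_theta, psi2.
  rewrite dot_scal_l, dot_add_l, !dot_scal_l,
    (F_BB _ _ _ _ H), F_NB. ring.
Qed.

Lemma D1 gam th t0 v : Hyp gam th t0 -> HypV gam th t0 ->
  vdot (tangent gam t0 v) (vD (vd_t gam t0) v) =
  - (speed gam t0 v * curvature gam t0 v * psi1 gam th t0 v).
Proof.
  intros H HV.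
  pose proof (Derive_const_fun (fun v => vdot (tangent gam t0 v) (vd_t gam t0 v)) 0 v
    (fun w => eq_trans (dot_sym _ _) (V_T _ _ _ w H HV))) as E.
  rewrite Derive_dot in E by (apply (L_T _ _ _ H) || apply (L_V _ _ _ H)).
  rewrite (F_T' _ _ _ _ H), dot_scal_l, (dot_sym (normal _ _ _)), (V_N _ _ _ _ H HV) in E. lra.
Qed.

Lemma N'_dot gam th t0 v X : Hyp gam th t0 ->
  vdot (vD (normal gam t0) v) X =
  vdot X (tangent gam t0 v) * (- (speed gam t0 v * curvature gam t0 v))
  + vdot X (binormal gam t0 v) * (speed gam t0 v * torsion gam t0 v).
Proof.
  intros H. rewrite (F_dec _ _ _ v H (vD (normal gam t0) v) X).
  rewrite (F_N'T _ _ _ _ H), (F_N'N _ _ _ _ H), (F_N'B _ _ _ _ H). ring.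
Qed.

Lemma D2 gam th t0 v : Hyp gam th t0 -> HypV gam th t0 ->
  vdot (normal gam t0 v) (vD (vd_t gam t0) v) =
  Derive (psi1 gam th t0) v - speed gam t0 v * torsion gam t0 v * psi2 gam th t0 v.
Proof.
  intros H HV.
  assert (E : Derive (fun v => vdot (normal gam t0 v) (vd_t gam t0 v)) v = Derive (psi1 gam th t0) v).
  { apply Derive_ext. intros w. rewrite dot_sym. apply (V_N _ _ _ _ H HV). }
  rewrite Derive_dot in E by (apply (L_N _ _ _ H) || apply (L_V _ _ _ H)).
  rewrite (N'_dot _ _ _ _ _ H), (V_T _ _ _ _ H HV), (V_B _ _ _ _ H HV) in E. lra.
Qed.

Lemma D3 gam th t0 v : Hyp gam th t0 -> HypV gam th t0 ->
  vdot (binormal gam t0 v) (vD (vd_t gam t0) v) =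
  Derive (psi2 gam th t0) v + speed gam t0 v * torsion gam t0 v * psi1 gam th t0 v.
Proof.
  intros H HV.
  assert (E : Derive (fun v => vdot (binormal gam t0 v) (vd_t gam t0 v)) v = Derive (psi2 gam th t0) v).
  { apply Derive_ext. intros w. rewrite dot_sym. apply (V_B _ _ _ _ H HV). }
  rewrite Derive_dot in E by (apply (L_B _ _ _ H) || apply (L_V _ _ _ H)).
  change (binormal gam t0) with (fun v => vcross (tangent gam t0 v) (normal gam t0 v)) in E.
  rewrite vD_cross in E by (apply (L_T _ _ _ H) || apply (L_N _ _ _ H)).
  rewrite dot_add_l, (F_T' _ _ _ _ H), cross_self_dot in E.
  rewrite (triple _ _ _ _ (F_NN _ _ _ _ H) (F_TN _ _ _ _ H)) in E.
  fold (binormal gam t0 v) in E.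
  rewrite (F_N'N _ _ _ _ H), (F_N'B _ _ _ _ H), (V_N _ _ _ _ H HV) in E.
  cbv beta in E. fold (binormal gam t0 v) in E. lra.
Qed.

Lemma D4 gam th t0 v : Hyp gam th t0 -> HypV gam th t0 ->
  vdot (tangent gam t0 v) (vD (vD (vd_t gam t0)) v) =
  Derive (fun w => - (speed gam t0 w * curvature gam t0 w * psi1 gam th t0 w)) v
  - speed gam t0 v * curvature gam t0 v * vdot (normal gam t0 v) (vD (vd_t gam t0) v).
Proof.
  intros H HV.
  assert (E : Derive (fun w => vdot (tangent gam t0 w) (vD (vd_t gam t0) w)) v =
              Derive (fun w => - (speed gam t0 w * curvature gam t0 w * psi1 gam th t0 w)) v).
  { apply Derive_ext. intros w. apply (D1 _ _ _ _ H HV). }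
  rewrite Derive_dot in E by (apply (L_T _ _ _ H) || (apply vsm_vD; apply (L_V _ _ _ H))).
  rewrite (F_T' _ _ _ _ H), dot_scal_l in E. lra.
Qed.

Lemma D5 gam th t0 v : Hyp gam th t0 -> HypV gam th t0 ->
  vdot (normal gam t0 v) (vD (vD (vd_t gam t0)) v) =
  Derive (fun w => Derive (psi1 gam th t0) w - speed gam t0 w * torsion gam t0 w * psi2 gam th t0 w) v
  - (vdot (tangent gam t0 v) (vD (vd_t gam t0) v) * (- (speed gam t0 v * curvature gam t0 v))
     + vdot (binormal gam t0 v) (vD (vd_t gam t0) v) * (speed gam t0 v * torsion gam t0 v)).
Proof.
  intros H HV.
  assert (E : Derive (fun w => vdot (normal gam t0 w) (vD (vd_t gam t0) w)) v =
              Derive (fun w => Derive (psi1 gam th t0) w - speed gam t0 w * torsion gam t0 w * psi2 gam th t0 w) v).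
  { apply Derive_ext. intros w. apply (D2 _ _ _ _ H HV). }
  rewrite Derive_dot in E by (apply (L_N _ _ _ H) || (apply vsm_vD; apply (L_V _ _ _ H))).
  rewrite (N'_dot _ _ _ _ _ H), (dot_sym _ (tangent _ _ _)), (dot_sym _ (binormal _ _ _)) in E. lra.
Qed.

Lemma Q_form gam th t0 v : Hyp gam th t0 ->
  vD (vd_u gam t0) v = vadd (vscal (Derive (speed gam t0) v) (tangent gam t0 v))
                            (vscal (speed gam t0 v * speed gam t0 v * curvature gam t0 v) (normal gam t0 v)).
Proof.
  intros H. rewrite (vD_ext _ (fun w => vscal (speed gam t0 w) (tangent gam t0 w)) v (fun w => F_P _ _ _ w H)).
  rewrite vD_scal by (apply (L_g _ _ _ H) || apply (L_T _ _ _ H)).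
  rewrite (F_T' _ _ _ _ H). apply vec_eq; cbn [vscal vadd vx vy vz mkv fst snd]; ring.
Qed.

Lemma dot_TN_comb a b T N X : vdot (vadd (vscal a T) (vscal b N)) X = a * vdot T X + b * vdot N X.
Proof. rewrite dot_add_l, !dot_scal_l. ring. Qed.

Lemma S_ps1 gam th t0 v : Hyp gam th t0 ->
  Derive (psi1 gam th t0) v = Derive (curvature gam t0) v * cos (th t0 v)
     - curvature gam t0 v * sin (th t0 v) * Derive (th t0) v.
Proof.
  intros H. pose proof (L_k _ _ _ H) as Hk. pose proof (L_th _ _ _ H) as Ht.
  unfold psi1. apply is_derive_unique. auto_derive.
  repeat split; apply sm_ex; auto. eta_fix. ring.
Qed.

Lemma S_ps2 gam th t0 v : Hyp gam th t0 ->
  Derive (psi2 gam th t0) v = Derive (curvature gam t0) v * sin (th t0 v)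
     + curvature gam t0 v * cos (th t0 v) * Derive (th t0) v.
Proof.
  intros H. pose proof (L_k _ _ _ H) as Hk. pose proof (L_th _ _ _ H) as Ht.
  unfold psi2. apply is_derive_unique. auto_derive.
  repeat split; apply sm_ex; auto. eta_fix. ring.
Qed.

Lemma S_ps1'' gam th t0 v : Hyp gam th t0 ->
  Derive (Derive (psi1 gam th t0)) v =
  Derive (Derive (curvature gam t0)) v * cos (th t0 v)
  - 2 * Derive (curvature gam t0) v * sin (th t0 v) * Derive (th t0) v
  - curvature gam t0 v * cos (th t0 v) * Derive (th t0) v * Derive (th t0) v
  - curvature gam t0 v * sin (th t0 v) * Derive (Derive (th t0)) v.
Proof.
  intros H. pose proof (L_k _ _ _ H) as Hk. pose proof (L_th _ _ _ H) as Ht.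
  pose proof (sm_Derive _ Hk) as Hk1. pose proof (sm_Derive _ Ht) as Ht1.
  rewrite (Derive_ext _ _ v (fun w => S_ps1 gam th t0 w H)).
  apply is_derive_unique. auto_derive.
  repeat split; apply sm_ex; auto. eta_fix. ring.
Qed.

Lemma S_TV2 gam th t0 v : Hyp gam th t0 ->
  Derive (fun w => - (speed gam t0 w * curvature gam t0 w * psi1 gam th t0 w)) v =
  - (Derive (speed gam t0) v * curvature gam t0 v * psi1 gam th t0 v
     + speed gam t0 v * Derive (curvature gam t0) v * psi1 gam th t0 v
     + speed gam t0 v * curvature gam t0 v * Derive (psi1 gam th t0) v).
Proof.
  intros H. pose proof (L_k _ _ _ H) as Hk. pose proof (L_g _ _ _ H) as Hg.
  pose proof (L_psi1 _ _ _ H) as Hp.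
  apply is_derive_unique. auto_derive.
  repeat split; apply sm_ex; auto. eta_fix. ring.
Qed.

Lemma S_NV2 gam th t0 v : Hyp gam th t0 ->
  Derive (fun w => Derive (psi1 gam th t0) w - speed gam t0 w * torsion gam t0 w * psi2 gam th t0 w) v =
  Derive (Derive (psi1 gam th t0)) v
  - (Derive (speed gam t0) v * torsion gam t0 v * psi2 gam th t0 v
     + speed gam t0 v * Derive (torsion gam t0) v * psi2 gam th t0 v
     + speed gam t0 v * torsion gam t0 v * Derive (psi2 gam th t0) v).
Proof.
  intros H. pose proof (L_tau _ _ _ H) as Hk. pose proof (L_g _ _ _ H) as Hg.
  pose proof (L_psi2 _ _ _ H) as Hp. pose proof (sm_Derive _ (L_psi1 _ _ _ H)) as Hp1.
  apply is_derive_unique. auto_derive.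
  repeat split; apply sm_ex; auto. eta_fix. ring.
Qed.

Lemma S_skappa gam th t0 v : Hyp gam th t0 ->
  Derive (fun w => s_der gam (curvature gam) t0 w) v =
  (Derive (Derive (curvature gam t0)) v * speed gam t0 v - Derive (curvature gam t0) v * Derive (speed gam t0) v)
    / (speed gam t0 v * speed gam t0 v).
Proof.
  intros H. pose proof (L_k _ _ _ H) as Hk. pose proof (L_g _ _ _ H) as Hg.
  pose proof (sm_Derive _ Hk) as Hk1.
  assert (Hg0 : speed gam t0 v <> 0) by (destruct H as [_ [_ [_ [H _]]]]; specialize (H v); lra).
  unfold s_der, d_u. apply is_derive_unique. auto_derive.
  repeat split; try apply sm_ex; auto. eta_fix. field. auto.
Qed.

Lemma S_psi3' gam th t0 v : Hyp gam th t0 ->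
  Derive (psi3 gam th t0) v =
  Derive (torsion gam t0) v + (Derive (Derive (th t0)) v * speed gam t0 v - Derive (th t0) v * Derive (speed gam t0) v)
    / (speed gam t0 v * speed gam t0 v).
Proof.
  intros H. pose proof (L_tau _ _ _ H) as Hk. pose proof (L_g _ _ _ H) as Hg.
  pose proof (sm_Derive _ (L_th _ _ _ H)) as Ht1.
  assert (Hg0 : speed gam t0 v <> 0) by (destruct H as [_ [_ [_ [H _]]]]; specialize (H v); lra).
  unfold psi3, s_der, d_u. apply is_derive_unique. auto_derive.
  repeat split; try apply sm_ex; auto. eta_fix. field. auto.
Qed.

Lemma S_ups gam th t0 v : Hyp gam th t0 ->
  let g := speed gam t0 v in let g1 := Derive (speed gam t0) v in
  let k := curvature gam t0 v in let k1 := Derive (curvature gam t0) v in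
  let k2 := Derive (Derive (curvature gam t0)) v in
  let ta := torsion gam t0 v in let ta1 := Derive (torsion gam t0) v in
  let th1 := Derive (th t0) v in let th2 := Derive (Derive (th t0)) v in
  let c := cos (th t0 v) in let s := sin (th t0 v) in
  let ps3 := ta + th1/g in let ps3' := ta1 + (th2*g - th1*g1)/(g*g) in
  upsilon gam th t0 v =
  -(k*(ps3'/g) + 2*(k1/g)*ps3) * /(k^2) * (k*c) - k * /(k*s) * ps3^2
    - ((((k2*g - k1*g1)/(g*g))/g) - k*ps3^2) * /(k^2)*(k*s).
Proof.
  intros H. intros. unfold upsilon.
  assert (E1 : s_der gam (psi3 gam th) t0 v = ps3' / g).
  { unfold s_der at 1, d_u. rewrite (S_psi3' _ _ _ _ H). reflexivity. }
  assert (E2 : s_der gam (s_der gam (curvature gam)) t0 v = (((k2*g - k1*g1)/(g*g))/g)).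
  { unfold s_der at 1, d_u. rewrite (S_skappa _ _ _ _ H). reflexivity. }
  rewrite E1, E2. reflexivity.
Qed.
Definition dGf0 (c s dc g g1 k TV1 NV1 TV2 NV2 : R) :=
  let pp := g*g in let qq := g1*g1 + (g*g*k)*(g*g*k) in let pq := g*g1 in
  let pdp := g*TV1 in let qdp := g1*TV1 + g*g*k*NV1 in
  let pdq := g*TV2 in let qdq := g1*TV2 + g*g*k*NV2 in
  let D := pp*qq - pq*pq in let sD := g*g*g*k in
  - s * dc * sD / pp + c * ((2*pdp*qq + pp*(2*qdq) - 2*pq*(qdp + pdq)) / (2*sD) / pp - sD * (2*pdp) / (pp*pp)).

Lemma final_alg (g g1 k k1 k2 ta ta1 th1 th2 c s : R) :
  0 < g -> 0 < k -> k * s <> 0 -> c*c + s*s = 1 ->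
  let ps1 := k*c in let ps2 := k*s in
  let ps1' := k1*c - k*s*th1 in let ps2' := k1*s + k*c*th1 in
  let ps1'' := k2*c - 2*k1*s*th1 - k*c*th1*th1 - k*s*th2 in
  let TV1 := -(g*k*ps1) in let NV1 := ps1' - g*ta*ps2 in let BV1 := ps2' + g*ta*ps1 in
  let TV2 := -(g1*k*ps1 + g*k1*ps1 + g*k*ps1') - g*k*NV1 in
  let NV2 := (ps1'' - (g1*ta*ps2 + g*ta1*ps2 + g*ta*ps2')) - (TV1*(-(g*k)) + BV1*(g*ta)) in
  let ps3 := ta + th1/g in let ps3' := ta1 + (th2*g - th1*g1)/(g*g) in
  let ks := k1/g in let kss := ((k2*g - k1*g1)/(g*g))/g in
  let ups := -(k*(ps3'/g) + 2*ks*ps3) * /(k^2) * ps1 - k * /ps2 * ps3^2 - (kss - k*ps3^2) * /(k^2)*ps2 in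
  dGf0 c s ups g g1 k TV1 NV1 TV2 NV2 = (k2*g - k1*g1)/(g*g).
Proof.
  intros Hg Hk Hs Hcs. intros. unfold dGf0.
  assert (E : dGf0 c s ups g g1 k TV1 NV1 TV2 NV2 - (k2*g - k1*g1)/(g*g) = g*(c*c+s*s-1)*(kss - k*ps3^2)).
  { unfold dGf0, ups, kss, ks, ps3', ps3, NV2, TV2, BV1, NV1, TV1, ps1'', ps2', ps1', ps2, ps1.
    field. repeat split; try lra. intro Hs0; apply Hs; rewrite Hs0; ring. }
  unfold dGf0 in E. rewrite Hcs in E. lra.
Qed.

Lemma final_alg2 (g g1 k k1 k2 ta ta1 th1 th2 c s ups TV1 NV1 BV1 TV2 NV2 : R) :
  0 < g -> 0 < k -> k * s <> 0 -> c*c + s*s = 1 ->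
  TV1 = -(g*k*(k*c)) ->
  NV1 = (k1*c - k*s*th1) - g*ta*(k*s) ->
  BV1 = (k1*s + k*c*th1) + g*ta*(k*c) ->
  TV2 = -(g1*k*(k*c) + g*k1*(k*c) + g*k*(k1*c - k*s*th1)) - g*k*NV1 ->
  NV2 = ((k2*c - 2*k1*s*th1 - k*c*th1*th1 - k*s*th2) - (g1*ta*(k*s) + g*ta1*(k*s) + g*ta*(k1*s + k*c*th1)))
        - (TV1*(-(g*k)) + BV1*(g*ta)) ->
  ups = -(k*((ta1 + (th2*g - th1*g1)/(g*g))/g) + 2*(k1/g)*(ta + th1/g)) * /(k^2) * (k*c)
        - k * /(k*s) * (ta + th1/g)^2
        - ((((k2*g - k1*g1)/(g*g))/g) - k*(ta + th1/g)^2) * /(k^2)*(k*s) ->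
  dGf0 c s ups g g1 k TV1 NV1 TV2 NV2 = (k2*g - k1*g1)/(g*g).
Proof.
  intros Hg Hk Hs Hcs E1 E2 E3 E4 E5 E6. subst TV1. subst BV1. subst NV1. subst TV2. subst NV2. subst ups.
  apply (final_alg g g1 k k1 k2 ta ta1 th1 th2 c s Hg Hk Hs Hcs).
Qed.

Definition Ddf (p q : vec) := vdot p p * vdot q q - vdot p q * vdot p q.
Definition Gf (c : R) (p q : vec) := cos c * sqrt (Ddf p q) / vdot p p.
Definition dGf (c dc : R) (p dp q dq : vec) :=
  - sin c * dc * sqrt (Ddf p q) / vdot p p
  + cos c * ((2 * vdot p dp * vdot q q + vdot p p * (2 * vdot q dq) - 2 * vdot p q * (vdot dp q + vdot p dq))
              / (2 * sqrt (Ddf p q)) / vdot p p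
             - sqrt (Ddf p q) * (2 * vdot p dp) / (vdot p p * vdot p p)).

Lemma dGf_eq c dc p dp q dq g g1 k TV1 NV1 TV2 NV2 : 0 < g -> 0 < k ->
  vdot p p = g*g -> vdot q q = g1*g1 + (g*g*k)*(g*g*k) -> vdot p q = g*g1 ->
  vdot p dp = g*TV1 -> vdot dp q = g1*TV1 + g*g*k*NV1 ->
  vdot p dq = g*TV2 -> vdot q dq = g1*TV2 + g*g*k*NV2 ->
  dGf c dc p dp q dq = dGf0 (cos c) (sin c) dc g g1 k TV1 NV1 TV2 NV2.
Proof.
  intros Hg Hk E1 E2 E3 E4 E5 E6 E7. unfold dGf, dGf0, Ddf.
  rewrite E1, E2, E3, E4, E5, E6, E7.
  replace (g * g * (g1 * g1 + g * g * k * (g * g * k)) - g * g1 * (g * g1)) with ((g*g*g*k)*(g*g*g*k)) by ring.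
  rewrite sqrt_square. reflexivity.
  repeat apply Rmult_le_pos; lra.
Qed.

Lemma core gam th t0 v : Hyp gam th t0 -> HypV gam th t0 ->
  (forall v, d_t th t0 v = upsilon gam th t0 v) -> (forall v, psi2 gam th t0 v <> 0) ->
  dGf (th t0 v) (d_t th t0 v) (vd_u gam t0 v) (vD (vd_t gam t0) v) (vD (vd_u gam t0) v) (vD (vD (vd_t gam t0)) v)
  = Derive (fun w => s_der gam (curvature gam) t0 w) v.
Proof.
  intros H HV Hth Hp2.
  assert (Hg : 0 < speed gam t0 v) by (destruct H as [_ [_ [_ [X _]]]]; auto).
  assert (Hk : 0 < curvature gam t0 v) by (destruct H as [_ [_ [_ [_ X]]]]; auto).
  pose proof (F_TT _ _ _ v H) as TT. pose proof (F_NN _ _ _ v H) as NN. pose proof (F_TN _ _ _ v H) as TN.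
  assert (NT : vdot (normal gam t0 v) (tangent gam t0 v) = 0) by (rewrite dot_sym; auto).
  rewrite (dGf_eq _ _ _ _ _ _ (speed gam t0 v) (Derive (speed gam t0) v) (curvature gam t0 v)
     (vdot (tangent gam t0 v) (vD (vd_t gam t0) v)) (vdot (normal gam t0 v) (vD (vd_t gam t0) v))
     (vdot (tangent gam t0 v) (vD (vD (vd_t gam t0)) v)) (vdot (normal gam t0 v) (vD (vD (vd_t gam t0)) v)) Hg Hk).
  2:{ rewrite (F_P _ _ _ v H), dot_scal_l, dot_scal_r, TT. ring. }
  2:{ rewrite (Q_form _ _ _ v H), dot_TN_comb, !(dot_sym _ (vadd _ _)), !dot_TN_comb, TT, NN, TN, NT. ring. }
  2:{ rewrite (Q_form _ _ _ v H), (F_P _ _ _ v H), dot_scal_l, (dot_sym _ (vadd _ _)), dot_TN_comb, TT, NT. ring. }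
  2:{ rewrite (F_P _ _ _ v H), dot_scal_l. ring. }
  2:{ rewrite (Q_form _ _ _ v H), (dot_sym _ (vadd _ _)), dot_TN_comb. ring. }
  2:{ rewrite (F_P _ _ _ v H), dot_scal_l. ring. }
  2:{ rewrite (Q_form _ _ _ v H), dot_TN_comb. ring. }
  rewrite (S_skappa _ _ _ _ H).
  assert (Hks : curvature gam t0 v * sin (th t0 v) <> 0) by apply (Hp2 v).
  apply (final_alg2 _ _ _ _ _ (torsion gam t0 v) (Derive (torsion gam t0) v) (Derive (th t0) v) (Derive (Derive (th t0)) v) _ _ _ _ _ (vdot (binormal gam t0 v) (vD (vd_t gam t0) v))); auto.
  - pose proof (sin2_cos2 (th t0 v)) as SC; unfold Rsqr in SC; lra.
  - rewrite (D1 _ _ _ _ H HV). unfold psi1. ring.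
  - rewrite (D2 _ _ _ _ H HV), (S_ps1 _ _ _ _ H). unfold psi2. ring.
  - rewrite (D3 _ _ _ _ H HV), (S_ps2 _ _ _ _ H). unfold psi1. ring.
  - rewrite (D4 _ _ _ _ H HV), (S_TV2 _ _ _ _ H), (S_ps1 _ _ _ _ H). unfold psi1. ring.
  - rewrite (D5 _ _ _ _ H HV), (S_NV2 _ _ _ _ H), (S_ps1'' _ _ _ _ H), (S_ps2 _ _ _ _ H).
    rewrite (D1 _ _ _ _ H HV), (D3 _ _ _ _ H HV), (S_ps2 _ _ _ _ H). unfold psi1, psi2. ring.
  - rewrite Hth. apply (S_ups _ _ _ _ H).
Qed.


Lemma cR_plus {X : UniformSpace} (f g : X -> R) x : continuous f x -> continuous g x -> continuous (fun y => f y + g y) x.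
Proof. intros; apply (continuous_plus f g x); auto. Qed.
Lemma cR_minus {X : UniformSpace} (f g : X -> R) x : continuous f x -> continuous g x -> continuous (fun y => f y - g y) x.
Proof. intros; apply (continuous_minus f g x); auto. Qed.
Lemma cR_mult {X : UniformSpace} (f g : X -> R) x : continuous f x -> continuous g x -> continuous (fun y => f y * g y) x.
Proof. intros; apply (continuous_mult f g x); auto. Qed.
Lemma cR_opp {X : UniformSpace} (f : X -> R) x : continuous f x -> continuous (fun y => - f y) x.
Proof. intros; apply (continuous_opp f x); auto. Qed.
Lemma cR_const {X : UniformSpace} (c : R) (x : X) : continuous (fun _ => c) x.
Proof. apply continuous_const. Qed.
Lemma cR_inv {X : UniformSpace} (f : X -> R) x : continuous f x -> f x <> 0 -> continuous (fun y => / f y) x.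
Proof. intros; apply (continuous_comp f Rinv x); auto. apply continuous_Rinv; auto. Qed.
Lemma cR_div {X : UniformSpace} (f g : X -> R) x : continuous f x -> continuous g x -> g x <> 0 -> continuous (fun y => f y / g y) x.
Proof. intros; unfold Rdiv; apply cR_mult; auto; apply cR_inv; auto. Qed.
Lemma cR_sqrt {X : UniformSpace} (f : X -> R) x : continuous f x -> continuous (fun y => sqrt (f y)) x.
Proof. intros; apply (continuous_comp f sqrt x); auto. apply continuous_sqrt. Qed.
Lemma cR_cos {X : UniformSpace} (f : X -> R) x : continuous f x -> continuous (fun y => cos (f y)) x.
Proof. intros; apply (continuous_comp f cos x); auto. apply continuous_cos. Qed.
Lemma cR_sin {X : UniformSpace} (f : X -> R) x : continuous f x -> continuous (fun y => sin (f y)) x.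
Proof. intros; apply (continuous_comp f sin x); auto. apply continuous_sin. Qed.

Ltac cont := repeat match goal with
  | |- continuous (fun y => @?f y + @?g y) _ => apply (cR_plus f g)
  | |- continuous (fun y => @?f y - @?g y) _ => apply (cR_minus f g)
  | |- continuous (fun y => @?f y * @?g y) _ => apply (cR_mult f g)
  | |- continuous (fun y => @?f y / @?g y) _ => apply (cR_div f g)
  | |- continuous (fun y => - @?f y) _ => apply (cR_opp f)
  | |- continuous (fun y => sqrt (@?f y)) _ => apply (cR_sqrt f)
  | |- continuous (fun y => cos (@?f y)) _ => apply (cR_cos f)
  | |- continuous (fun y => sin (@?f y)) _ => apply (cR_sin f)
  | |- continuous (fun y => IZR _) _ => apply cR_const
  end.

Definition vcont {X : UniformSpace} (p : X -> vec) x :=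
  continuous (fun y => vx (p y)) x /\ continuous (fun y => vy (p y)) x /\ continuous (fun y => vz (p y)) x.

Lemma cR_dot {X : UniformSpace} (p q : X -> vec) x : vcont p x -> vcont q x -> continuous (fun y => vdot (p y) (q y)) x.
Proof. intros [A [B C]] [A' [B' C']]. unfold vdot. cont; auto. Qed.

Lemma cont_dGf {X : UniformSpace} (a da : X -> R) (p dp q dq : X -> vec) x :
  continuous a x -> continuous da x -> vcont p x -> vcont dp x -> vcont q x -> vcont dq x ->
  0 < vdot (p x) (p x) -> 0 < Ddf (p x) (q x) ->
  continuous (fun y => dGf (a y) (da y) (p y) (dp y) (q y) (dq y)) x.
Proof.
  intros Ha Hda Hp Hdp Hq Hdq H1 H2. unfold dGf, Ddf.
  assert (S : 0 < sqrt (Ddf (p x) (q x))) by (apply sqrt_lt_R0; auto). unfold Ddf in S.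
  cont; try apply cR_dot; auto; try lra.
  all: try (apply Rgt_not_eq; apply Rmult_lt_0_compat; lra).
Qed.

Lemma cont_Gf {X : UniformSpace} (a : X -> R) (p q : X -> vec) x :
  continuous a x -> vcont p x -> vcont q x -> 0 < vdot (p x) (p x) ->
  continuous (fun y => Gf (a y) (p y) (q y)) x.
Proof.
  intros Ha Hp Hq H1. unfold Gf, Ddf. cont; try apply cR_dot; auto; lra.
Qed.

Lemma tder (p1 p2 p3 : R -> R) x : ex_derive p1 x -> ex_derive p2 x -> ex_derive p3 x ->
  0 < p1 x * p1 x + p2 x * p2 x + p3 x * p3 x ->
  Derive (fun v => / sqrt (p1 v * p1 v + p2 v * p2 v + p3 v * p3 v) * p1 v) x =
  / sqrt (p1 x * p1 x + p2 x * p2 x + p3 x * p3 x) * Derive p1 x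
  + (- (p1 x * Derive p1 x + p2 x * Derive p2 x + p3 x * Derive p3 x)
     / (sqrt (p1 x * p1 x + p2 x * p2 x + p3 x * p3 x) * sqrt (p1 x * p1 x + p2 x * p2 x + p3 x * p3 x)
        * sqrt (p1 x * p1 x + p2 x * p2 x + p3 x * p3 x))) * p1 x.
Proof.
  intros H1 H2 H3 Hp. assert (S := sqrt_lt_R0 _ Hp).
  apply is_derive_unique. auto_derive. repeat split; auto; lra.
  eta_fix. field. lra.
Qed.

Lemma W_alg (P Q : vec) g : 0 < g -> vdot P P = g * g ->
  let W := vscal (/g) (vadd (vscal (/g) Q) (vscal (- vdot P Q / (g*g*g)) P)) in
  vdot W W = Ddf P Q * (/ (g*g*g) * / (g*g*g)).
Proof.
  intros Hg HP W. unfold W, Ddf.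
  rewrite !dot_scal_l, !dot_scal_r, !dot_add_l, !dot_add_r, !dot_scal_l, !dot_scal_r.
  rewrite (dot_sym Q P), HP. field. lra.
Qed.

Lemma sqrt_mul_sq x y : 0 < y -> sqrt (x * (y * y)) = sqrt x * y.
Proof.
  intros Hy. destruct (Rle_lt_dec 0 x) as [h|h].
  - rewrite sqrt_mult_alt; auto. rewrite sqrt_square; lra.
  - rewrite !sqrt_neg_0; try lra. assert (0 < y*y) by nra. nra.
Qed.

Lemma k_closed gam s u :
  ex_derive (fun v => vx (vd_u gam s v)) u -> ex_derive (fun v => vy (vd_u gam s v)) u ->
  ex_derive (fun v => vz (vd_u gam s v)) u ->
  0 < vdot (vd_u gam s u) (vd_u gam s u) ->
  curvature gam s u = sqrt (Ddf (vd_u gam s u) (vd_u (vd_u gam) s u)) *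
        / (speed gam s u * speed gam s u * speed gam s u).
Proof.
  intros H1 H2 H3 Hp.
  assert (Hg : 0 < speed gam s u) by (apply sqrt_lt_R0; auto).
  assert (HPP : vdot (vd_u gam s u) (vd_u gam s u) = speed gam s u * speed gam s u).
  { unfold speed, vnorm. rewrite sqrt_sqrt; lra. }
  assert (ET : vD (tangent gam s) u =
     vadd (vscal (/ speed gam s u) (vd_u (vd_u gam) s u))
          (vscal (- vdot (vd_u gam s u) (vd_u (vd_u gam) s u) / (speed gam s u * speed gam s u * speed gam s u)) (vd_u gam s u))).
  { apply vec_eq; cbn [vD vadd vscal vx vy vz mkv fst snd].
    - rewrite (Derive_ext (fun v => vx (tangent gam s v))
        (fun v => / sqrt (vx (vd_u gam s v) * vx (vd_u gam s v) + vy (vd_u gam s v) * vy (vd_u gam s v) + vz (vd_u gam s v) * vz (vd_u gam s v)) * vx (vd_u gam s v))) by reflexivity.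
      rewrite tder by auto. unfold speed, vnorm, vdot. reflexivity.
    - rewrite (Derive_ext (fun v => vy (tangent gam s v))
        (fun v => / sqrt (vy (vd_u gam s v) * vy (vd_u gam s v) + vz (vd_u gam s v) * vz (vd_u gam s v) + vx (vd_u gam s v) * vx (vd_u gam s v)) * vy (vd_u gam s v))).
      2:{ intros v. unfold tangent, speed, vnorm, vdot. cbn [vscal vx vy vz mkv fst snd]. f_equal. f_equal. f_equal. ring. }
      rewrite tder by (auto; unfold vdot in Hp; lra). unfold speed, vnorm, vdot.
      replace (vy (vd_u gam s u) * vy (vd_u gam s u) + vz (vd_u gam s u) * vz (vd_u gam s u) + vx (vd_u gam s u) * vx (vd_u gam s u))
        with (vx (vd_u gam s u) * vx (vd_u gam s u) + vy (vd_u gam s u) * vy (vd_u gam s u) + vz (vd_u gam s u) * vz (vd_u gam s u)) by ring.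
      change (vy (vd_u (vd_u gam) s u)) with (Derive (fun v => vy (vd_u gam s v)) u).
      change (vx (vd_u (vd_u gam) s u)) with (Derive (fun v => vx (vd_u gam s v)) u).
      change (vz (vd_u (vd_u gam) s u)) with (Derive (fun v => vz (vd_u gam s v)) u).
      field; apply Rgt_not_eq; apply sqrt_lt_R0; unfold vdot in Hp; lra.
    - rewrite (Derive_ext (fun v => vz (tangent gam s v))
        (fun v => / sqrt (vz (vd_u gam s v) * vz (vd_u gam s v) + vx (vd_u gam s v) * vx (vd_u gam s v) + vy (vd_u gam s v) * vy (vd_u gam s v)) * vz (vd_u gam s v))).
      2:{ intros v. unfold tangent, speed, vnorm, vdot. cbn [vscal vx vy vz mkv fst snd]. f_equal. f_equal. f_equal. ring. }
      rewrite tder by (auto; unfold vdot in Hp; lra). unfold speed, vnorm, vdot.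
      replace (vz (vd_u gam s u) * vz (vd_u gam s u) + vx (vd_u gam s u) * vx (vd_u gam s u) + vy (vd_u gam s u) * vy (vd_u gam s u))
        with (vx (vd_u gam s u) * vx (vd_u gam s u) + vy (vd_u gam s u) * vy (vd_u gam s u) + vz (vd_u gam s u) * vz (vd_u gam s u)) by ring.
      change (vy (vd_u (vd_u gam) s u)) with (Derive (fun v => vy (vd_u gam s v)) u).
      change (vx (vd_u (vd_u gam) s u)) with (Derive (fun v => vx (vd_u gam s v)) u).
      change (vz (vd_u (vd_u gam) s u)) with (Derive (fun v => vz (vd_u gam s v)) u).
      field; apply Rgt_not_eq; apply sqrt_lt_R0; unfold vdot in Hp; lra. }
  assert (EK : curvature gam s u = sqrt (Ddf (vd_u gam s u) (vd_u (vd_u gam) s u) *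
        (/ (speed gam s u * speed gam s u * speed gam s u) * / (speed gam s u * speed gam s u * speed gam s u)))).
  { unfold curvature, vnorm, vs_der. rewrite vd_u_vD, ET. f_equal. apply W_alg; auto. }
  rewrite EK, sqrt_mul_sq. reflexivity. apply Rinv_0_lt_compat. repeat apply Rmult_lt_0_compat; lra.
Qed.

Lemma kg_closed gam th s u :
  ex_derive (fun v => vx (vd_u gam s v)) u -> ex_derive (fun v => vy (vd_u gam s v)) u ->
  ex_derive (fun v => vz (vd_u gam s v)) u ->
  0 < vdot (vd_u gam s u) (vd_u gam s u) ->
  psi1 gam th s u * speed gam s u = Gf (th s u) (vd_u gam s u) (vd_u (vd_u gam) s u).
Proof.
  intros H1 H2 H3 Hp.
  assert (Hg : 0 < speed gam s u) by (apply sqrt_lt_R0; auto).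
  assert (HPP : vdot (vd_u gam s u) (vd_u gam s u) = speed gam s u * speed gam s u).
  { unfold speed, vnorm. rewrite sqrt_sqrt; lra. }
  unfold psi1, Gf. rewrite k_closed, HPP; auto. field. lra.
Qed.

Lemma Ddf_pos gam s u :
  ex_derive (fun v => vx (vd_u gam s v)) u -> ex_derive (fun v => vy (vd_u gam s v)) u ->
  ex_derive (fun v => vz (vd_u gam s v)) u ->
  0 < vdot (vd_u gam s u) (vd_u gam s u) -> 0 < curvature gam s u ->
  0 < Ddf (vd_u gam s u) (vd_u (vd_u gam) s u).
Proof.
  intros H1 H2 H3 Hp Hk. rewrite k_closed in Hk; auto.
  assert (Hg : 0 < speed gam s u) by (apply sqrt_lt_R0; auto).
  apply sqrt_pos_inv. assert (0 < / (speed gam s u * speed gam s u * speed gam s u)).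
  apply Rinv_0_lt_compat. repeat apply Rmult_lt_0_compat; lra.
  pose proof (sqrt_pos (Ddf (vd_u gam s u) (vd_u (vd_u gam) s u))). nra.
Qed.

Lemma dG_abs (a p1 p2 p3 q1 q2 q3 : R -> R) x :
  ex_derive a x -> ex_derive p1 x -> ex_derive p2 x -> ex_derive p3 x ->
  ex_derive q1 x -> ex_derive q2 x -> ex_derive q3 x ->
  0 < vdot (mkv (p1 x) (p2 x) (p3 x)) (mkv (p1 x) (p2 x) (p3 x)) ->
  0 < Ddf (mkv (p1 x) (p2 x) (p3 x)) (mkv (q1 x) (q2 x) (q3 x)) ->
  is_derive (fun s => Gf (a s) (mkv (p1 s) (p2 s) (p3 s)) (mkv (q1 s) (q2 s) (q3 s))) x
    (dGf (a x) (Derive a x) (mkv (p1 x) (p2 x) (p3 x)) (mkv (Derive p1 x) (Derive p2 x) (Derive p3 x))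
         (mkv (q1 x) (q2 x) (q3 x)) (mkv (Derive q1 x) (Derive q2 x) (Derive q3 x))).
Proof.
  intros. unfold Gf, dGf, Ddf, vdot, mkv, vx, vy, vz in *. simpl in *.
  assert (S := sqrt_lt_R0 _ H7).
  auto_derive. repeat split; auto; lra.
  unfold Rminus in *. eta_fix. field. lra.
Qed.

Lemma iter_pd_du ds f : iter_pd ds (d_u f) = iter_pd (ds ++ Pu :: nil) f.
Proof. unfold iter_pd. rewrite fold_right_app. reflexivity. Qed.

Lemma smooth_on_du U f : smooth_on U f -> smooth_on U (d_u f).
Proof. intros H ds t u Hu. rewrite iter_pd_du. apply H; auto. Qed.

Lemma open2_l2d U t u : open2 U -> U t u -> locally_2d U t u.
Proof.
  intros HO Hu. destruct (HO t u Hu) as [e [He H]]. exists (mkposreal e He). simpl. auto.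
Qed.

Lemma cont_iter U f ds t u : smooth_on U f -> U t u ->
  continuity_2d_pt (fun a b => iter_pd ds f a b) t u.
Proof.
  intros H Hu. apply continuity_2d_pt_filterlim. apply (proj2 (proj2 (H ds t u Hu))).
Qed.

Lemma schwarz_du U f t u : open2 U -> smooth_on U f -> U t u ->
  d_t (d_u f) t u = d_u (d_t f) t u.
Proof.
  intros HO H Hu. unfold d_t, d_u.
  apply (Schwarz f t u).
  - apply locally_2d_impl with U; [|apply open2_l2d; auto].
    apply locally_2d_forall. intros a b Hab.
    split; [apply (proj1 (H nil a b Hab))|].
    split; [apply (proj1 (proj2 (H nil a b Hab)))|].
    split; [apply (proj1 (H (Pu :: nil) a b Hab))|].
    apply (proj1 (proj2 (H (Pt :: nil) a b Hab))).
  - apply (cont_iter U f (Pt :: Pu :: nil) t u H Hu).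
  - apply (cont_iter U f (Pu :: Pt :: nil) t u H Hu).
Qed.

Lemma Derive_per (f : R -> R) c : (forall v, f (v + c) = f v) -> forall v, Derive f (v + c) = Derive f v.
Proof.
  intros H v. unfold Derive. f_equal. apply Lim_ext. intros h.
  replace (v + c + h) with ((v + h) + c) by ring. rewrite !H. reflexivity.
Qed.

Definition vper (F : R -> vec) := forall v, F (v + 2 * PI) = F v.
Definition per (f : R -> R) := forall v, f (v + 2 * PI) = f v.

Lemma vD_per F : vper F -> vper (vD F).
Proof.
  intros H v. unfold vD. apply vec_eq; cbn [vx vy vz mkv fst snd]; apply Derive_per; intros w; rewrite H; auto.
Qed.

Lemma W_per gam t0 : vper (gam t0) -> per (fun w => s_der gam (curvature gam) t0 w).
Proof.
  intros H.
  assert (HP : vper (vd_u gam t0)) by (intros v; rewrite !vd_u_vD; apply vD_per; auto).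
  assert (Hg : per (speed gam t0)) by (intros v; unfold speed; rewrite HP; auto).
  assert (HT : vper (tangent gam t0)) by (intros v; unfold tangent; rewrite HP, Hg; auto).
  assert (HT' : vper (vd_u (tangent gam) t0)) by (intros v; rewrite !vd_u_vD; apply vD_per; auto).
  assert (Hk : per (curvature gam t0)) by (intros v; unfold curvature, vs_der; rewrite HT', Hg; auto).
  intros v. unfold s_der, d_u. rewrite Hg. f_equal. apply Derive_per. apply Hk.
Qed.

Definition Good U gam s v := U s v /\ 0 < vdot (vd_u gam s v) (vd_u gam s v) /\
  0 < Ddf (vd_u gam s v) (vd_u (vd_u gam) s v).

Lemma pos_loc f x y : continuity_2d_pt f x y -> 0 < f x y -> locally_2d (fun u v => 0 < f u v) x y.
Proof.
  intros C H. specialize (C (mkposreal _ H)). simpl in C.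
  apply locally_2d_impl with (2 := C). apply locally_2d_forall. intros u v Hr.
  apply Rabs_def2 in Hr. lra.
Qed.

Lemma vcont_P U gam x : vsmooth_on U gam -> U (fst x) (snd x) ->
  vcont (fun z : R * R => vd_u gam (fst z) (snd z)) x.
Proof.
  intros [A [B C]] Hx. destruct x as [t u]. simpl in Hx.
  repeat split.
  - apply (proj2 (proj2 (A (Pu :: nil) t u Hx))).
  - apply (proj2 (proj2 (B (Pu :: nil) t u Hx))).
  - apply (proj2 (proj2 (C (Pu :: nil) t u Hx))).
Qed.

Lemma vcont_Q U gam x : vsmooth_on U gam -> U (fst x) (snd x) ->
  vcont (fun z : R * R => vd_u (vd_u gam) (fst z) (snd z)) x.
Proof.
  intros [A [B C]] Hx. destruct x as [t u]. simpl in Hx.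
  repeat split.
  - apply (proj2 (proj2 (A (Pu :: Pu :: nil) t u Hx))).
  - apply (proj2 (proj2 (B (Pu :: Pu :: nil) t u Hx))).
  - apply (proj2 (proj2 (C (Pu :: Pu :: nil) t u Hx))).
Qed.

Lemma pos_loc' (F : R * R -> R) x y : continuous F (x, y) -> 0 < F (x, y) ->
  locally_2d (fun u v => 0 < F (u, v)) x y.
Proof.
  intros C H. apply (pos_loc (fun u v => F (u, v))); auto.
  apply continuity_2d_pt_filterlim. simpl.
  apply filterlim_ext with F. intros [a b]; reflexivity. exact C.
Qed.

Lemma good_loc U gam t v : open2 U -> vsmooth_on U gam -> Good U gam t v -> locally_2d (Good U gam) t v.
Proof.
  intros HO Hs [HU [H1 H2]].
  pose proof (vcont_P U gam (t,v) Hs HU) as CP.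
  pose proof (vcont_Q U gam (t,v) Hs HU) as CQ.
  apply locally_2d_and; [apply open2_l2d; auto|]. apply locally_2d_and.
  - pose proof (cR_dot _ _ _ CP CP) as X.
    apply (pos_loc' (fun z => vdot (vd_u gam (fst z) (snd z)) (vd_u gam (fst z) (snd z))) t v X H1).
  - assert (X : continuous (fun z : R * R => Ddf (vd_u gam (fst z) (snd z)) (vd_u (vd_u gam) (fst z) (snd z))) (t, v)).
    { unfold Ddf. cont; apply cR_dot; auto. }
    apply (pos_loc' _ t v X H2).
Qed.

Lemma box U gam t0 a b : open2 U -> vsmooth_on U gam -> (forall v, Good U gam t0 v) ->
  exists d : posreal, forall s v, Rabs (s - t0) < d -> a <= v <= b -> Good U gam s v.
Proof.
  intros HO Hs HG.
  assert (Hl : forall v, locally_2d (Good U gam) t0 v) by (intros; apply good_loc; auto).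
  set (delta := fun v => proj1_sig (constructive_indefinite_description _ (Hl v))).
  assert (Hd : forall v s w, Rabs (s - t0) < delta v -> Rabs (w - v) < delta v -> Good U gam s w).
  { intros v. unfold delta. destruct (constructive_indefinite_description _ (Hl v)) as [e He]. simpl. auto. }
  destruct (compactness_value_1d a b delta) as [d Hc]. exists d.
  intros s v Hs' Hv. specialize (Hc v Hv). apply NNPP. intros HN. apply Hc.
  intros [t [Ht [H1 H2]]]. apply HN. apply (Hd t); lra.
Qed.

Lemma schwarz_P U gam t0 u : open2 U -> vsmooth_on U gam -> U t0 u ->
  vd_t (vd_u gam) t0 u = vD (vd_t gam t0) u.
Proof.
  intros HO [A [B C]] Hu. apply vec_eq.
  - change (d_t (d_u (fun t u => vx (gam t u))) t0 u = Derive (fun v => d_t (fun t u => vx (gam t u)) t0 v) u).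
    rewrite (schwarz_du U); auto.
  - change (d_t (d_u (fun t u => vy (gam t u))) t0 u = Derive (fun v => d_t (fun t u => vy (gam t u)) t0 v) u).
    rewrite (schwarz_du U); auto.
  - change (d_t (d_u (fun t u => vz (gam t u))) t0 u = Derive (fun v => d_t (fun t u => vz (gam t u)) t0 v) u).
    rewrite (schwarz_du U); auto.
Qed.

Lemma schwarz_Q U gam t0 u : open2 U -> vsmooth_on U gam -> (forall v, U t0 v) ->
  vd_t (vd_u (vd_u gam)) t0 u = vD (vD (vd_t gam t0)) u.
Proof.
  intros HO [A [B C]] Hu. apply vec_eq.
  - change (d_t (d_u (d_u (fun t u => vx (gam t u)))) t0 u =
            Derive (fun w => Derive (fun v => d_t (fun t u => vx (gam t u)) t0 v) w) u).
    rewrite (schwarz_du U); auto. 2: apply smooth_on_du; auto.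
    unfold d_u at 1. apply Derive_ext. intros w. apply (schwarz_du U); auto.
  - change (d_t (d_u (d_u (fun t u => vy (gam t u)))) t0 u =
            Derive (fun w => Derive (fun v => d_t (fun t u => vy (gam t u)) t0 v) w) u).
    rewrite (schwarz_du U); auto. 2: apply smooth_on_du; auto.
    unfold d_u at 1. apply Derive_ext. intros w. apply (schwarz_du U); auto.
  - change (d_t (d_u (d_u (fun t u => vz (gam t u)))) t0 u =
            Derive (fun w => Derive (fun v => d_t (fun t u => vz (gam t u)) t0 v) w) u).
    rewrite (schwarz_du U); auto. 2: apply smooth_on_du; auto.
    unfold d_u at 1. apply Derive_ext. intros w. apply (schwarz_du U); auto.
Qed.

Lemma mkHyp U gam th t0 : (forall v, U t0 v) -> vsmooth_on U gam -> smooth_on U th ->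
  (forall v, 0 < speed gam t0 v /\ 0 < curvature gam t0 v /\ psi2 gam th t0 v <> 0) -> Hyp gam th t0.
Proof.
  intros HU [A [B C]] Hth Hp. split; [|split; [|split; [|split]]].
  - split; [|split].
    + exact (sm_iter U _ t0 A HU nil).
    + exact (sm_iter U _ t0 B HU nil).
    + exact (sm_iter U _ t0 C HU nil).
  - exact (sm_iter U _ t0 Hth HU nil).
  - split; [|split].
    + exact (sm_iter U _ t0 A HU (Pt :: nil)).
    + exact (sm_iter U _ t0 B HU (Pt :: nil)).
    + exact (sm_iter U _ t0 C HU (Pt :: nil)).
  - intros v; apply Hp.
  - intros v; apply Hp.
Qed.

Definition Gst gam th s u := Gf (th s u) (vd_u gam s u) (vd_u (vd_u gam) s u).
Definition dGst gam th s u := dGf (th s u) (d_t th s u) (vd_u gam s u) (vd_t (vd_u gam) s u)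
   (vd_u (vd_u gam) s u) (vd_t (vd_u (vd_u gam)) s u).

Lemma Gst_eq U gam th s u : vsmooth_on U gam -> Good U gam s u ->
  psi1 gam th s u * speed gam s u = Gst gam th s u.
Proof.
  intros [A [B C]] [HU [H1 H2]]. unfold Gst. apply kg_closed; auto.
  - exact (proj1 (proj2 (A (Pu :: nil) s u HU))).
  - exact (proj1 (proj2 (B (Pu :: nil) s u HU))).
  - exact (proj1 (proj2 (C (Pu :: nil) s u HU))).
Qed.

Lemma Gst_der U gam th s u : vsmooth_on U gam -> smooth_on U th -> Good U gam s u ->
  is_derive (fun z => Gst gam th z u) s (dGst gam th s u).
Proof.
  intros [A [B C]] Hth [HU [H1 H2]].
  exact (dG_abs (fun z => th z u) (fun z => vx (vd_u gam z u)) (fun z => vy (vd_u gam z u)) (fun z => vz (vd_u gam z u))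
    (fun z => vx (vd_u (vd_u gam) z u)) (fun z => vy (vd_u (vd_u gam) z u)) (fun z => vz (vd_u (vd_u gam) z u)) s
    (proj1 (Hth nil s u HU))
    (proj1 (A (Pu :: nil) s u HU)) (proj1 (B (Pu :: nil) s u HU)) (proj1 (C (Pu :: nil) s u HU))
    (proj1 (A (Pu :: Pu :: nil) s u HU)) (proj1 (B (Pu :: Pu :: nil) s u HU)) (proj1 (C (Pu :: Pu :: nil) s u HU))
    H1 H2).
Qed.

Lemma vcont_dP U gam x : vsmooth_on U gam -> U (fst x) (snd x) ->
  vcont (fun z : R * R => vd_t (vd_u gam) (fst z) (snd z)) x.
Proof.
  intros [A [B C]] Hx. destruct x as [t u]. simpl in Hx.
  repeat split.
  - apply (proj2 (proj2 (A (Pt :: Pu :: nil) t u Hx))).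
  - apply (proj2 (proj2 (B (Pt :: Pu :: nil) t u Hx))).
  - apply (proj2 (proj2 (C (Pt :: Pu :: nil) t u Hx))).
Qed.

Lemma vcont_dQ U gam x : vsmooth_on U gam -> U (fst x) (snd x) ->
  vcont (fun z : R * R => vd_t (vd_u (vd_u gam)) (fst z) (snd z)) x.
Proof.
  intros [A [B C]] Hx. destruct x as [t u]. simpl in Hx.
  repeat split.
  - apply (proj2 (proj2 (A (Pt :: Pu :: Pu :: nil) t u Hx))).
  - apply (proj2 (proj2 (B (Pt :: Pu :: Pu :: nil) t u Hx))).
  - apply (proj2 (proj2 (C (Pt :: Pu :: Pu :: nil) t u Hx))).
Qed.

Lemma dGst_cont U gam th t u : vsmooth_on U gam -> smooth_on U th -> Good U gam t u ->
  continuity_2d_pt (dGst gam th) t u.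
Proof.
  intros Hg Hth [HU [H1 H2]]. apply continuity_2d_pt_filterlim.
  exact (cont_dGf (fun z : R * R => th (fst z) (snd z)) (fun z : R * R => d_t th (fst z) (snd z))
    (fun z : R * R => vd_u gam (fst z) (snd z)) (fun z : R * R => vd_t (vd_u gam) (fst z) (snd z))
    (fun z : R * R => vd_u (vd_u gam) (fst z) (snd z)) (fun z : R * R => vd_t (vd_u (vd_u gam)) (fst z) (snd z)) (t, u)
    (proj2 (proj2 (Hth nil t u HU))) (proj2 (proj2 (Hth (Pt :: nil) t u HU)))
    (vcont_P U gam (t, u) Hg HU) (vcont_dP U gam (t, u) Hg HU)
    (vcont_Q U gam (t, u) Hg HU) (vcont_dQ U gam (t, u) Hg HU) H1 H2).
Qed.

Lemma Gst_cont_u U gam th s z : vsmooth_on U gam -> smooth_on U th -> Good U gam s z ->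
  continuous (fun v => Gst gam th s v) z.
Proof.
  intros [A [B C]] Hth [HU [H1 H2]].
  apply (cont_Gf (fun v => th s v) (fun v => vd_u gam s v) (fun v => vd_u (vd_u gam) s v) z).
  - apply (ex_derive_continuous (fun v => th s v)). exact (proj1 (proj2 (Hth nil s z HU))).
  - split; [|split].
    + apply (ex_derive_continuous (fun v => vx (vd_u gam s v))). exact (proj1 (proj2 (A (Pu :: nil) s z HU))).
    + apply (ex_derive_continuous (fun v => vy (vd_u gam s v))). exact (proj1 (proj2 (B (Pu :: nil) s z HU))).
    + apply (ex_derive_continuous (fun v => vz (vd_u gam s v))). exact (proj1 (proj2 (C (Pu :: nil) s z HU))).
  - split; [|split].
    + apply (ex_derive_continuous (fun v => vx (vd_u (vd_u gam) s v))). exact (proj1 (proj2 (A (Pu :: Pu :: nil) s z HU))).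
    + apply (ex_derive_continuous (fun v => vy (vd_u (vd_u gam) s v))). exact (proj1 (proj2 (B (Pu :: Pu :: nil) s z HU))).
    + apply (ex_derive_continuous (fun v => vz (vd_u (vd_u gam) s v))). exact (proj1 (proj2 (C (Pu :: Pu :: nil) s z HU))).
  - exact H1.
Qed.

Lemma ball_R (x y : R) (e : R) : ball x e y -> Rabs (y - x) < e.
Proof. intros H. exact H. Qed.

Lemma tri3 y s t0 e d : Rabs (y - s) < d - e -> Rabs (s - t0) = e -> Rabs (y - t0) < d.
Proof.
  intros H1 H2. replace (y - t0) with ((y - s) + (s - t0)) by ring.
  pose proof (Rabs_triang (y - s) (s - t0)). lra.
Qed.

Lemma W_sm gam th t0 : Hyp gam th t0 -> sm (fun w => s_der gam (curvature gam) t0 w).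
Proof.
  intros H. apply sm_ext with (fun w => Derive (curvature gam t0) w * / speed gam t0 w). intros; reflexivity.
  apply sm_mult. apply sm_Derive, (L_k _ _ _ H). apply sm_inv. intros x; destruct H as [_ [_ [_ [Hg _]]]]; specialize (Hg x); lra.
  apply (L_g _ _ _ H).
Qed.

Lemma deriv_zero U gam th t0 :
  open2 U -> (forall v, U t0 v) -> vsmooth_on U gam -> smooth_on U th -> vper (gam t0) ->
  (forall v, 0 < speed gam t0 v /\ 0 < curvature gam t0 v /\ psi2 gam th t0 v <> 0) ->
  (forall v, vd_t gam t0 v = vscal (curvature gam t0 v) (nu_theta gam th t0 v) /\ d_t th t0 v = upsilon gam th t0 v) ->
  is_derive (total_psi1 gam th) t0 0.
Proof.
  intros HO HU Hg Hth Hper Hpos Hfl.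
  pose proof (mkHyp U gam th t0 HU Hg Hth Hpos) as H.
  assert (HG : forall v, Good U gam t0 v).
  { intros v. destruct Hg as [A [B C]]. split; [auto|split].
    - apply L_pp_pos. apply Hpos.
    - apply Ddf_pos; try apply Hpos.
      + exact (proj1 (proj2 (A (Pu :: nil) t0 v (HU v)))).
      + exact (proj1 (proj2 (B (Pu :: nil) t0 v (HU v)))).
      + exact (proj1 (proj2 (C (Pu :: nil) t0 v (HU v)))).
      + apply L_pp_pos; apply Hpos. }
  destruct (box U gam t0 (-1) (2*PI+1) HO Hg HG) as [d Hd].
  assert (PI0 := PI_RGT_0).
  assert (C3 : forall s u, Rabs (s - t0) < d -> -1 <= u <= 2*PI+1 ->
     is_derive (fun z => psi1 gam th z u * speed gam z u) s (dGst gam th s u)).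
  { intros s u Hs Hu. apply is_derive_ext_loc with (fun z => Gst gam th z u).
    - assert (He : 0 < d - Rabs (s - t0)) by lra.
      exists (mkposreal _ He). intros y Hy. apply ball_R in Hy. simpl in Hy.
      symmetry. apply (Gst_eq U); auto. apply Hd; auto. eapply tri3; eauto.
    - apply (Gst_der U); auto. }
  assert (Rmin 0 (2*PI) = 0) as Em by (apply Rmin_left; lra).
  assert (Rmax 0 (2*PI) = 2*PI) as EM by (apply Rmax_right; lra).
  assert (D := is_derive_RInt_param (fun z u => psi1 gam th z u * speed gam z u) 0 (2*PI) t0).
  rewrite Em, EM in D.
  assert (V : RInt (fun u => Derive (fun z => psi1 gam th z u * speed gam z u) t0) 0 (2*PI) = 0).
  { rewrite (RInt_ext _ (Derive (fun w => s_der gam (curvature gam) t0 w))).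
    - rewrite RInt_Derive.
      + pose proof (W_per gam t0 Hper 0) as E. rewrite Rplus_0_l in E. rewrite E. first [apply minus_eq_zero | apply Rminus_diag | ring].
      + intros x _. apply sm_ex, (W_sm _ _ _ H).
      + intros x _. apply (ex_derive_continuous (Derive (fun w => s_der gam (curvature gam) t0 w))). apply sm_ex, sm_Derive, (W_sm _ _ _ H).
    - intros x Hx. rewrite Em, EM in Hx.
      cbv beta. transitivity (dGst gam th t0 x).
      { apply is_derive_unique. apply C3. rewrite Rminus_diag, Rabs_R0; apply cond_pos. lra. }
      unfold dGst. rewrite (schwarz_P U), (schwarz_Q U); auto.
      apply core; auto.
      + intros v; apply Hfl.
      + intros v; apply Hfl.
      + intros v; apply Hpos. }
  rewrite <- V. unfold total_psi1. apply D.
  - exists d. intros s Hs u Hu. apply ball_R in Hs. exists (dGst gam th s u). apply C3; auto. lra.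
  - intros u Hu. apply continuity_2d_pt_ext_loc with (dGst gam th).
    + assert (Hm : 0 < Rmin d 1) by (apply Rmin_pos; [apply cond_pos | lra]).
      exists (mkposreal _ Hm). simpl. intros s w Hs Hw.
      pose proof (Rmin_l d 1). pose proof (Rmin_r d 1).
      symmetry. apply is_derive_unique. apply C3. lra.
      apply Rabs_def2 in Hw. lra.
    + apply (dGst_cont U); auto.
  - exists d. intros s Hs. apply ball_R in Hs.
    apply ex_RInt_ext with (fun u => Gst gam th s u).
    + intros x Hx. rewrite Em, EM in Hx. symmetry. apply (Gst_eq U); auto. apply Hd; auto; lra.
    + apply (ex_RInt_continuous (fun u => Gst gam th s u)). intros z Hz. rewrite Em, EM in Hz. apply (Gst_cont_u U); auto. apply Hd; auto; lra.
Qed.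

Lemma Rbar_lt_le_trans_R (x a : R) (T : Rbar) : x <= a -> Rbar_lt (Finite a) T -> Rbar_lt (Finite x) T.
Proof. destruct T; simpl; auto; lra. Qed.

Theorem mainTheorem19 (Tmax : Rbar) (gam : vfield) (th : field) (U : R -> R -> Prop) :
  open2 U ->
  (forall t u, 0 <= t -> Rbar_lt (Finite t) Tmax -> U t u) ->
  vsmooth_on U gam -> smooth_on U th ->
  (forall t u, 0 <= t -> Rbar_lt (Finite t) Tmax ->
     gam t (u + 2 * PI) = gam t u /\ th t (u + 2 * PI) = th t u) ->
  (forall t u, 0 <= t -> Rbar_lt (Finite t) Tmax ->
     0 < speed gam t u /\ 0 < curvature gam t u /\ psi2 gam th t u <> 0) ->
  (forall t u, 0 <= t -> Rbar_lt (Finite t) Tmax ->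
     vd_t gam t u = vscal (curvature gam t u) (nu_theta gam th t u) /\
     d_t th t u = upsilon gam th t u) ->
  forall t1 t2, 0 <= t1 -> Rbar_lt (Finite t1) Tmax -> 0 <= t2 -> Rbar_lt (Finite t2) Tmax ->
    total_psi1 gam th t1 = total_psi1 gam th t2.
Proof.
  intros HO Hdom Hg Hth Hper Hpos Hfl t1 t2 H1 H1' H2 H2'.
  assert (Hd : forall t, 0 <= t -> Rbar_lt (Finite t) Tmax -> is_derive (total_psi1 gam th) t 0).
  { intros t Ht Ht'. apply (deriv_zero U); auto.
    intros v. apply (proj1 (Hper t v Ht Ht')). }
  assert (Hin : forall x, Rmin t1 t2 <= x <= Rmax t1 t2 -> 0 <= x /\ Rbar_lt (Finite x) Tmax).
  { intros x [Hx1 Hx2]. split.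
    - pose proof (Rmin_glb_lt) as _. unfold Rmin in Hx1. destruct (Rle_dec t1 t2); lra.
    - unfold Rmax in Hx2. destruct (Rle_dec t1 t2).
      + apply Rbar_lt_le_trans_R with t2; auto.
      + apply Rbar_lt_le_trans_R with t1; auto. }
  destruct (MVT_gen (total_psi1 gam th) t1 t2 (fun _ => 0)) as [c [_ Hc]].
  - intros x Hx. apply Hd; apply Hin; lra.
  - intros x Hx. apply continuity_pt_filterlim.
    apply (ex_derive_continuous (total_psi1 gam th)). exists 0. apply Hd; apply Hin; lra.
  - lra.
Qed.
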